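(* Let $(G_k)_{k\in\mathbb Z}$ be a gibonacci sequence. For every positive integer $n$ and every integer $t$, \begin{equation*} \begin{split} 44\sum_{j = 1}^n G_{j + t}^5 &= -\left(G_{n + t + 3}^5 - G_{t + 3}^5\right) + 7\left(G_{n + t + 2}^5 - G_{t + 2}^5\right) + 47\left(G_{n + t + 1}^5 - G_{t + 1}^5\right)\\ &\qquad + 31\left(G_{n + t}^5 - G_t^5\right) - 9\left(G_{n + t - 1}^5 - G_{t - 1}^5\right) - \left(G_{n + t - 2}^5 - G_{t - 2}^5\right) \end{split} \end{equation*} and \begin{equation*} \begin{split} 44\sum_{j = 1}^n (-1)^{j - 1}G_{j + t}^5 &= -\left((-1)^{n + 1}G_{n + t + 3}^5 + G_{t + 3}^5\right) + 9\left((-1)^{n + 1}G_{n + t + 2}^5 + G_{t + 2}^5\right)\\ &\quad + 31\left((-1)^{n + 1}G_{n + t + 1}^5 + G_{t + 1}^5\right) - 47\left((-1)^{n + 1}G_{n + t}^5 + G_t^5\right)\\ &\quad + 7\left((-1)^{n + 1}G_{n + t - 1}^5 + G_{t - 1}^5\right) + \left((-1)^{n + 1}G_{n + t - 2}^5 + G_{t - 2}^5\right). \end{split} \end{equation*}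
   Context: A gibonacci sequence $(G_k)_{k\in\mathbb Z}$ is defined by arbitrary initial values $G_0=a$, $G_1=b$ (numbers, not both zero) and $G_k=G_{k-1}+G_{k-2}$ for all integers $k$ (equivalently $G_{-k}=G_{-(k-2)}-G_{-(k-1)}$ extends it to negative indices). *)

(* Defs.v *)
From mathcomp Require Import all_boot all_order all_algebra.
Set Implicit Arguments. Unset Strict Implicit. Unset Printing Implicit Defensive.
Import Order.TTheory GRing.Theory Num.Theory.
Local Open Scope ring_scope.

Definition gibonacci (R : numFieldType) (G : int -> R) : Prop :=
  (forall k : int, G k = G (k - 1) + G (k - 2)) /\ (G 0 != 0 \/ G 1 != 0).

(* Main.v *)
Require Import Defs.
From mathcomp Require Import all_boot all_order all_algebra.
From mathcomp Require Import ring.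
Import Order.TTheory GRing.Theory Num.Theory.
Local Open Scope ring_scope.

Theorem proposition1 (R : numFieldType) (G : int -> R) (n : nat) (t : int) :
  gibonacci G -> (0 < n)%N ->
  (44 * \sum_(1 <= j < n.+1) G (j%:Z + t) ^+ 5 =
     - (G (n%:Z + t + 3) ^+ 5 - G (t + 3) ^+ 5)
     + 7 * (G (n%:Z + t + 2) ^+ 5 - G (t + 2) ^+ 5)
     + 47 * (G (n%:Z + t + 1) ^+ 5 - G (t + 1) ^+ 5)
     + 31 * (G (n%:Z + t) ^+ 5 - G t ^+ 5)
     - 9 * (G (n%:Z + t - 1) ^+ 5 - G (t - 1) ^+ 5)
     - (G (n%:Z + t - 2) ^+ 5 - G (t - 2) ^+ 5))
  /\
  (44 * \sum_(1 <= j < n.+1) (-1) ^+ j.-1 * G (j%:Z + t) ^+ 5 =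
     - ((-1) ^+ n.+1 * G (n%:Z + t + 3) ^+ 5 + G (t + 3) ^+ 5)
     + 9 * ((-1) ^+ n.+1 * G (n%:Z + t + 2) ^+ 5 + G (t + 2) ^+ 5)
     + 31 * ((-1) ^+ n.+1 * G (n%:Z + t + 1) ^+ 5 + G (t + 1) ^+ 5)
     - 47 * ((-1) ^+ n.+1 * G (n%:Z + t) ^+ 5 + G t ^+ 5)
     + 7 * ((-1) ^+ n.+1 * G (n%:Z + t - 1) ^+ 5 + G (t - 1) ^+ 5)
     + ((-1) ^+ n.+1 * G (n%:Z + t - 2) ^+ 5 + G (t - 2) ^+ 5)).
Proof.
move=> [hG _] _.
have rec u : G (u + 2) = G (u + 1) + G u.
  by rewrite hG; congr (G _ + G _); ring.
have g2 u : G (u + 2) = G u + G (u + 1) by rewrite rec addrC.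
have g3 u : G (u + 3) = G u + 2 * G (u + 1).
  have -> : u + 3 = (u + 1) + 2 by ring.
  rewrite rec -addrA g2; ring.
have g4 u : G (u + 4) = 2 * G u + 3 * G (u + 1).
  have -> : u + 4 = (u + 2) + 2 by ring.
  rewrite rec -addrA (_ : 2 + 1 = 3 :> int) // g3 g2; ring.
have g5 u : G (u + 5) = 3 * G u + 5 * G (u + 1).
  have -> : u + 5 = (u + 3) + 2 by ring.
  rewrite rec -addrA (_ : 3 + 1 = 4 :> int) // g3 g4; ring.
have g6 u : G (u + 6) = 5 * G u + 8 * G (u + 1).
  have -> : u + 6 = (u + 4) + 2 by ring.
  rewrite rec -addrA (_ : 4 + 1 = 5 :> int) // g4 g5; ring.
elim: n => [|n [IH1 IH2]].
  rewrite !big_geq // !add0r; split; ring.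
set u := n%:Z + t - 2.
have e0 : n%:Z + t - 2 = u by [].
have e1 : n.+1%:Z + t - 2 = u + 1 by rewrite /u; ring.
have e1' : n%:Z + t - 1 = u + 1 by rewrite /u; ring.
have e2 : n.+1%:Z + t - 1 = u + 2 by rewrite /u; ring.
have e2' : n%:Z + t = u + 2 by rewrite /u; ring.
have e3 : n.+1%:Z + t = u + 3 by rewrite /u; ring.
have e3' : n%:Z + t + 1 = u + 3 by rewrite /u; ring.
have e4 : n.+1%:Z + t + 1 = u + 4 by rewrite /u; ring.
have e4' : n%:Z + t + 2 = u + 4 by rewrite /u; ring.
have e5 : n.+1%:Z + t + 2 = u + 5 by rewrite /u; ring.
have e5' : n%:Z + t + 3 = u + 5 by rewrite /u; ring.
have e6 : n.+1%:Z + t + 3 = u + 6 by rewrite /u; ring.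
rewrite e5' e4' e3' e1' e0 e2' in IH1 IH2.
rewrite [in LHS]big_nat_recr //= [in X in _ /\ X]big_nat_recr //= !mulrDr IH1 IH2 e1 e2 e4 e5 e6 e3.
rewrite !g6 !g5 !g4 !g3 !g2 !(exprS (-1)); split; ring.
Qed.
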